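(* Let $(k,|\cdot|)$ be an algebraically closed complete metrized field, $\mathbb{D}=\{t\in k:|t|<1\}$, $d\ge2$, and let $P_t(z)=\alpha_0(t)z^d+\cdots+\alpha_d(t)$ with $\alpha_i\in\mathcal{O}(\mathbb{D})[t^{-1}]$ and $\alpha_0(t)\ne0$ for $t\ne0$. Let $C>0$ be a constant such that $$\left|\frac1d\log\max\{1,|P_t(z)|\}-\log\max\{1,|z|\}\right|\le C\log|t|^{-1}\quad\text{for all }0<|t|\le\tfrac12,\ z\in k.$$ Let $a\in\mathcal{O}(\mathbb{D})[t^{-1}]$ be such that $u_m(t):=P_t^m(a(t))$ is analytic on $\mathbb{D}$ for all $m\ge0$, and set $g_m(t):=d^{-m}\log\max\{1,|u_m(t)|\}$. Let $l\ge Cd$ be an integer and let $Q_1,\dots,Q_N\in k[t]$ be polynomials such that for every $n\ge0$ there is $i_n\in\{1,\dots,N\}$ with $(u_n(t)-Q_{i_n}(t))/t^l$ analytic on $\mathbb{D}$. Put $A:=\max_{1\le j\le N}\left\{\sup_{|t|<1}|Q_j(t)|+2\right\}$. Let $n_0\ge1$ be an integer and $0<r_0\le\frac12$ with $\sup_{|t|<r_0}|u_{n_0}(t)|\le\log A$, and set $r_j:=r_0^{2^j}$ for $j\ge0$. Then for all $j\ge0$, $$\sup_{|t|<r_j}g_{n_0+j}(t)\le\frac{C_1}{d^{n_0}},\qquad\text{where }C_1=\frac{d}{d-1}\log(3A).$$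
   Context: $\mathcal{O}(\mathbb{D})$ is the ring of analytic functions on $\mathbb{D}$; $\mathcal{O}(\mathbb{D})[t^{-1}]$ consists of meromorphic functions on $\mathbb{D}$ with poles only at $0$. *)

(* Defs.v *)
From HB Require Import structures.
From mathcomp Require Import all_boot all_order all_algebra.
From mathcomp Require Import all_classical all_reals.
From mathcomp Require Import exp.
Set Implicit Arguments. Unset Strict Implicit. Unset Printing Implicit Defensive.
Import Order.TTheory GRing.Theory Num.Theory.
Local Open Scope ring_scope.

Section Defs.
Variables (R : realType) (k : fieldType) (abs : k -> R).

Definition is_absval : Prop :=
  [/\ forall x, 0 <= abs x,
      forall x, abs x = 0 <-> x = 0,
      forall x y, abs (x * y) = abs x * abs y
    & forall x y, abs (x + y) <= abs x + abs y].

Definition kconverges (s : nat -> k) (x : k) : Prop :=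
  forall eps : R, 0 < eps -> exists N : nat, forall n, (N <= n)%N -> abs (s n - x) < eps.

Definition kcauchy (s : nat -> k) : Prop :=
  forall eps : R, 0 < eps -> exists N : nat,
    forall n m, (N <= n)%N -> (N <= m)%N -> abs (s n - s m) < eps.

Definition kcomplete : Prop :=
  forall s, kcauchy s -> exists x, kconverges s x.

Definition inD (t : k) : Prop := abs t < 1.

Definition analytic_on_D (f : k -> k) : Prop :=
  exists c : nat -> k, forall t, inD t ->
    kconverges (fun n => \sum_(i < n) c i * t ^+ i) (f t).

(* f is in O(D)[t^{-1}]: meromorphic on D with poles only at 0,
   i.e. f(t) = h(t) / t^m on D \ {0} with h analytic on D
   (the value of f at 0 is irrelevant). *)
Definition merom_at0_on_D (f : k -> k) : Prop :=
  exists (m : nat) (h : k -> k), analytic_on_D h /\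
    forall t, inD t -> t != 0 -> f t = h t / t ^+ m.

End Defs.

(* Main.v *)
Require Import Defs.
From HB Require Import structures.
From mathcomp Require Import all_boot all_order all_algebra.
From mathcomp Require Import all_classical all_reals.
From mathcomp Require Import exp.
From mathcomp Require Import lra zify ring.
Import Order.TTheory GRing.Theory Num.Theory.
Local Open Scope ring_scope.



Section Real.
Variable R : realType.

Lemma bernoulli (mu : R) (n : nat) : 0 <= mu -> 1 + n%:R * mu <= (1 + mu) ^+ n.
Proof.
move=> mu0; elim: n => [|n IH]; first by rewrite expr0 mul0r addr0.
rewrite exprS -natr1.
have h1 : 0 <= 1 + mu by lra.
apply: (le_trans _ (ler_wpM2l h1 IH)).
have : 0 <= n%:R * mu * mu by apply: mulr_ge0 => //; apply: mulr_ge0.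
nra.
Qed.

Lemma geo_small (lam eps : R) : 0 <= lam < 1 -> 0 < eps -> exists n : nat, lam ^+ n < eps.
Proof.
move=> /andP[l0 l1] e0.
have [->|lnz] := eqVneq lam 0; first by exists 1%N; rewrite expr1.
have lp : 0 < lam by rewrite lt_def lnz l0.
set mu := lam^-1 - 1.
have mu0 : 0 < mu by rewrite /mu subr_gt0 invf_gt1.
set n := Num.truncn (eps^-1 / mu).
have Hn := truncnS_gt (eps^-1 / mu).
exists n.+1.
have hb := @bernoulli mu n.+1 (ltW mu0).
have e1 : 1 + mu = lam^-1 by rewrite /mu; lra.
rewrite e1 exprVn in hb.
have hpos : 0 < lam ^+ n.+1 by apply: exprn_gt0.
rewrite -(@ltf_pV2 _ eps) ?posrE //.
apply: (lt_le_trans _ hb).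
have : eps^-1 < n.+1%:R * mu.
  by rewrite -ltr_pdivrMr.
lra.
Qed.

End Real.

Section Abs.
Variables (R : realType) (k : closedFieldType) (abs : k -> R).
Hypothesis Habs : is_absval abs.

Lemma abs_ge0 x : 0 <= abs x. Proof. by case: Habs. Qed.
Lemma abs_eq0 x : abs x = 0 <-> x = 0. Proof. by case: Habs. Qed.
Lemma absM x y : abs (x * y) = abs x * abs y. Proof. by case: Habs. Qed.
Lemma absD x y : abs (x + y) <= abs x + abs y. Proof. by case: Habs. Qed.
Lemma abs0 : abs 0 = 0. Proof. by apply/abs_eq0. Qed.
Lemma abs_gt0 [x] : x != 0 -> 0 < abs x.
Proof.
move=> xn; rewrite lt_def abs_ge0 andbT; apply/eqP => /abs_eq0 h; by rewrite h eqxx in xn.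
Qed.
Lemma abs1 : abs 1 = 1.
Proof.
have h : abs 1 = abs 1 * abs 1 by rewrite -absM mulr1.
have h0 : abs 1 != 0 by apply/lt0r_neq0/abs_gt0/oner_neq0.
by apply: (mulIf h0); rewrite mul1r -h.
Qed.
Lemma absX x n : abs (x ^+ n) = abs x ^+ n.
Proof. by elim: n => [|n IH]; rewrite ?expr0 ?abs1 // !exprS absM IH. Qed.
Lemma absN1 : abs (-1) = 1.
Proof.
have h : abs (-1) ^+ 2 = 1 by rewrite -absX sqrrN expr1n abs1.
by apply/eqP; rewrite -(pexpr_eq1 (n:=2)) ?h ?abs_ge0.
Qed.
Lemma absN x : abs (- x) = abs x.
Proof. by rewrite -mulN1r absM absN1 mul1r. Qed.
Lemma absB x y : abs (x - y) <= abs x + abs y.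
Proof. by rewrite -(absN y) absD. Qed.
Lemma absV x : abs (x^-1) = (abs x)^-1.
Proof.
have [->|xn] := eqVneq x 0; first by rewrite invr0 abs0 invr0.
have h : abs (x^-1) * abs x = 1 by rewrite -absM mulVf // abs1.
by rewrite -[LHS]mulr1 -(mulfV (lt0r_neq0 (abs_gt0 xn))) mulrA h mul1r.
Qed.
Lemma abs_sub_le x y : abs x - abs y <= abs (x - y).
Proof.
have := absD (x - y) y; rewrite subrK; lra.
Qed.
Lemma abs_sum (I : Type) (r : seq I) (P : pred I) (F : I -> k) :
  abs (\sum_(i <- r | P i) F i) <= \sum_(i <- r | P i) abs (F i).
Proof.
elim/big_rec2: _; first by rewrite abs0.
move=> i y1 y2 _ h; apply: (le_trans (absD _ _)); lra.
Qed.

Definition nontriv := exists x0, 0 < abs x0 < 1.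

Lemma density : nontriv -> forall a b : R, 0 <= a -> a < b -> b <= 1 ->
  exists s, a < abs s < b.
Proof.
move=> [x0 /andP[t0 t1]] a b a0 ab b1.
have b0 : 0 < b by lra.
set lam := a / b.
have lam0 : 0 <= lam by apply: divr_ge0 => //; lra.
have lam1 : lam < 1 by rewrite /lam ltr_pdivrMr // mul1r.
have [N0 HN0] : exists N0, lam ^+ N0 < abs x0 by apply: geo_small => //; rewrite lam0 lam1.
set N := N0.+1.
have HN : lam ^+ N < abs x0.
  apply: le_lt_trans HN0; rewrite /N exprS; apply: ler_piMl => //; [exact: exprn_ge0|exact: ltW].
have [y Hy] := @solve_monicpoly k N (fun i => if i == 0%N then x0 else 0) (ltn0Sn N0).
have ey : y ^+ N = x0.
  rewrite Hy big_ord_recl /= expr0 mulr1 big1 ?addr0 // => i _.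
  by rewrite /bump /= mul0r.
set eta := abs y.
have eN : eta ^+ N = abs x0 by rewrite /eta -absX ey.
have eta0 : 0 <= eta by apply: abs_ge0.
have etal : lam < eta.
  rewrite ltNge; apply/negP => hle.
  have : eta ^+ N <= lam ^+ N by rewrite ler_pXn2r // ?nnegrE.
  rewrite eN; move: HN; lra.
have eta1 : eta < 1.
  rewrite ltNge; apply/negP => hle.
  have : 1 <= eta ^+ N by apply: exprn_ege1.
  rewrite eN; move: t1; lra.
have exm : exists m, eta ^+ m < b by apply: geo_small => //; rewrite eta0 eta1.
case: (ex_minnP exm) => m Hm Hmin.
case: m Hm Hmin => [|m] Hm Hmin.
  by move: Hm; rewrite expr0; lra.
have Hm' : b <= eta ^+ m.
  rewrite leNgt; apply/negP => h; have := Hmin _ h; by rewrite ltnn.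
exists (y ^+ m.+1); rewrite absX -/eta Hm andbT exprS.
have : lam * b = a by rewrite /lam divfK //; lra.
have : 0 <= eta ^+ m by apply: exprn_ge0.
nra.
Qed.

End Abs.
Arguments abs_ge0 {R k abs}.
Arguments abs_eq0 {R k abs}.
Arguments absM {R k abs}.
Arguments absD {R k abs}.
Arguments abs0 {R k abs}.
Arguments abs_gt0 {R k abs} Habs [x].
Arguments abs1 {R k abs}.
Arguments absX {R k abs}.
Arguments absN1 {R k abs}.
Arguments absN {R k abs}.
Arguments absB {R k abs}.
Arguments absV {R k abs}.
Arguments abs_sub_le {R k abs}.
Arguments abs_sum {R k abs}.
Arguments density {R k abs}.
Arguments nontriv {R k}.



Section Unity.
Variable k : closedFieldType.

Lemma root_exists (x : k) n : (0 < n)%N -> exists y : k, y ^+ n = x.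
Proof.
case: n => // n _.
have [y Hy] := @solve_monicpoly k n.+1 (fun i => if i == 0%N then x else 0) (ltn0Sn n).
exists y; rewrite Hy big_ord_recl /= expr0 mulr1 big1 ?addr0 // => i _.
by rewrite /bump /= mul0r.
Qed.

Lemma exists_q : exists q, prime q /\ (q%:R : k) != 0.
Proof.
have [h2|h2] := eqVneq (2%:R : k) 0; last by exists 2%N.
exists 3%N; split => //.
by rewrite (natrD _ 2 1) h2 add0r oner_neq0.
Qed.

Lemma prim_exists q e : prime q -> (q%:R : k) != 0 -> (0 < e)%N ->
  exists w : k, (q ^ e).-primitive_root w.
Proof.
move=> pq qn e0.
have q1 : (1 < q)%N by apply: prime_gt1.
have H : forall n, exists w : k, w ^+ (q ^ n.+1) = 1 /\ w ^+ (q ^ n) != 1.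
  elim => [|n [w [w1 w2]]].
    have [z Hz] := @solve_monicpoly k q.-1 (fun _ => -1) (ltac:(by rewrite -subn1 subn_gt0)).
    have hs : \sum_(i < q) z ^+ i = 0.
      rewrite -(prednK (prime_gt0 pq)) big_ord_recr /= Hz.
      rewrite -big_split /= big1 // => i _; by rewrite mulN1r addrN.
    exists z; rewrite expn0 expn1 expr1; split.
      by apply/eqP; rewrite -subr_eq0 subrX1 hs mulr0.
    apply/eqP => z1; move: hs; rewrite z1.
    under eq_bigr do rewrite expr1n.
    by rewrite sumr_const card_ord => /eqP; rewrite (negbTE qn).
  have [w' Hw'] := @root_exists w q (prime_gt0 pq).
  exists w'; split; by rewrite expnS exprM Hw'.
case: e e0 => // e _.
have [w [w1 w2]] := H e.
exists w.
have H0 : (0 < q ^ e.+1)%N by rewrite expn_gt0 prime_gt0.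
have [m mp mdvd] := prim_order_exists H0 w1.
move/(dvdn_pfactor _ _ pq): mdvd => [f fle mE].
move: mp; rewrite mE => mp.
have [fe|fne] := eqVneq f e.+1; first by rewrite -fe.
have fle' : (f <= e)%N by move: fle fne; case: ltngtP.
have : (q ^ f %| q ^ e)%N by rewrite dvdn_exp2l.
by rewrite (prim_order_dvd mp) (negbTE w2).
Qed.

Lemma orth (N : nat) (w : k) : N.-primitive_root w -> forall m,
  \sum_(i < N) (w ^+ m) ^+ i = if (N %| m)%N then N%:R else 0.
Proof.
move=> wp m; case: ifP => hd.
  have : w ^+ m = 1 by apply/eqP; rewrite -(prim_order_dvd wp).
  move=> ->; rewrite (eq_bigr (fun _ => 1)); last by move=> i _; rewrite expr1n.
  by rewrite sumr_const card_ord.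
have wm : w ^+ m - 1 != 0 by rewrite subr_eq0 -(prim_order_dvd wp) hd.
apply: (mulfI wm); rewrite mulr0 -subrX1 -exprM mulnC exprM (prim_expr_order wp).
by rewrite expr1n subrr.
Qed.

Lemma dvd_iNj (N i j : nat) : (i < N)%N -> (j < N)%N -> (N %| i + (N - j))%N = (i == j).
Proof.
move=> iN jN; case: (ltngtP i j) => hij.
- apply/negbTE/negP => /(dvdn_leq _); lia.
- have -> : (i + (N - j) = N + (i - j))%N by lia.
  rewrite dvdn_addr //; apply/negbTE/negP => /(dvdn_leq _); lia.
- by rewrite hij subnKC ?dvdnn // ltnW.
Qed.

Lemma interp (N : nat) (w s t : k) (P : {poly k}) : (N%:R : k) != 0 ->
  N.-primitive_root w -> s != 0 -> (size P <= N)%N ->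
  P.[t] = \sum_(m < N) P.[w ^+ m * s] *
     ((N%:R * s ^+ N)^-1 * \sum_(j < N) t ^+ j * (w ^+ m * s) ^+ (N - j)).
Proof.
move=> Nn wp sn PN.
have key : forall i j : 'I_N, \sum_(m < N) (w ^+ m * s) ^+ i * (w ^+ m * s) ^+ (N - j)
    = if i == j then N%:R * s ^+ N else 0.
  move=> i j.
  rewrite (eq_bigr (fun m : 'I_N => (w ^+ (i + (N - j))) ^+ m * s ^+ (i + (N - j)))); last first.
    by move=> m _; rewrite -exprD exprMn -exprM mulnC exprM.
  rewrite -big_distrl /= orth // dvd_iNj //.
  case: (eqVneq i j) => [->|nij]; first by rewrite !eqxx subnKC // ltnW.
  have nij' : (i : nat) != j by [].
  by rewrite (negbTE nij') mul0r.
symmetry.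
rewrite (eq_bigr (fun m : 'I_N => (N%:R * s^+N)^-1 * \sum_(i<N) \sum_(j<N)
   (P`_i * t^+j) * ((w^+m*s)^+i * (w^+m*s)^+(N-j)))); last first.
  move=> m _; rewrite (horner_coef_wide _ PN) mulrCA big_distrl /=; congr (_ * _).
  apply: eq_bigr => i _; rewrite big_distrr /=; apply: eq_bigr => j _; by rewrite mulrACA.
rewrite -big_distrr /= exchange_big /=.
rewrite (eq_bigr (fun i : 'I_N => P`_i * t ^+ i * (N%:R * s ^+ N))); last first.
  move=> i _; rewrite exchange_big /=.
  rewrite (eq_bigr (fun j : 'I_N => P`_i * t ^+ j * (if i == j then N%:R * s ^+ N else 0))); last first.
    by move=> j _; rewrite -big_distrr /= key.
  rewrite (bigD1 i) //= eqxx big1 ?addr0 // => j /negbTE; rewrite eq_sym => ->.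
  by rewrite mulr0.
have Mn : N%:R * s ^+ N != 0 by rewrite mulf_neq0 // expf_neq0.
by rewrite -big_distrl /= mulrC -mulrA mulfV // mulr1 (horner_coef_wide _ PN).
Qed.

End Unity.



Lemma nat_exp_big (C : nat) [q : nat] : (1 < q)%N -> exists e, (0 < e)%N /\ (C * e < q ^ e)%N.
Proof.
move=> q1; set f := (2 * C + 1)%N.
exists (2 * f)%N; split; first by rewrite /f; lia.
have hf : (f < q ^ f)%N by apply: ltn_expl.
have h2 : (f * f < q ^ f * q ^ f)%N by apply: ltn_mul.
rewrite mul2n -addnn expnD; apply: leq_ltn_trans h2; rewrite /f; nia.
Qed.

Section PolyMP.
Variables (R : realType) (k : closedFieldType) (abs : k -> R).
Hypothesis Habs : is_absval abs.

Lemma abs_unit [N : nat] [w : k] : N.-primitive_root w -> abs w = 1.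
Proof.
move=> wp; have N0 := prim_order_gt0 wp.
have : abs w ^+ N = 1 by rewrite -(absX Habs) (prim_expr_order wp) (abs1 Habs).
by move/eqP; rewrite pexpr_eq1 ?(abs_ge0 Habs) // => /eqP.
Qed.

Lemma interp_bound (N : nat) (w s t : k) (P : {poly k}) (B : R) :
  (N%:R : k) != 0 -> N.-primitive_root w -> s != 0 -> (size P <= N)%N ->
  abs t <= abs s -> (forall x, abs x = abs s -> abs P.[x] <= B) ->
  abs P.[t] <= N%:R * (N%:R / abs (N%:R : k)) * B.
Proof.
move=> Nn wp sn PN ts HB.
have B0 : 0 <= B by apply: le_trans (HB s erefl); apply: (abs_ge0 Habs).
have aw := abs_unit wp.
have axm : forall m, abs (w ^+ m * s) = abs s by move=> m; rewrite absM // absX // aw expr1n mul1r.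
have as0 : 0 < abs s by apply: (abs_gt0 Habs).
have aN0 : 0 < abs (N%:R : k) by apply: (abs_gt0 Habs).
rewrite (@interp k N w s t P Nn wp sn PN).
apply: le_trans (abs_sum Habs _ _ _ _) _.
have -> : N%:R * (N%:R / abs (N%:R : k)) * B = \sum_(m < N) ((N%:R / abs (N%:R : k)) * B).
  by rewrite sumr_const card_ord -[RHS]mulr_natl !mulrA.
apply: ler_sum => m _.
rewrite absM // mulrC; apply: ler_pM; rewrite ?(abs_ge0 Habs) ?HB ?axm //.
rewrite absM // absV // absM // absX // mulrC.
have hs : abs (\sum_(j < N) t ^+ j * (w ^+ m * s) ^+ (N - j)) <= N%:R * abs s ^+ N.
  apply: le_trans (abs_sum Habs _ _ _ _) _.
  have -> : N%:R * abs s ^+ N = \sum_(j < N) abs s ^+ N.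
    by rewrite sumr_const card_ord -[RHS]mulr_natl.
  apply: ler_sum => j _; rewrite absM // !absX // axm.
  have -> : abs s ^+ N = abs s ^+ j * abs s ^+ (N - j) by rewrite -exprD subnKC // ltnW.
  apply: ler_pM; rewrite ?exprn_ge0 ?(abs_ge0 Habs) //.
  by apply: lerXn2r; rewrite ?nnegrE ?(abs_ge0 Habs).
have hpos : 0 < abs (N%:R : k) * abs s ^+ N by apply: mulr_gt0 => //; apply: exprn_gt0.
have hinv : 0 <= (abs (N%:R : k) * abs s ^+ N)^-1 by rewrite invr_ge0 ltW.
apply: le_trans (ler_wpM2r hinv hs) _.
rewrite le_eqVlt; apply/orP; left; apply/eqP.
have h1 : abs (N%:R : k) != 0 by apply: lt0r_neq0.
have h2 : abs s != 0 by apply: lt0r_neq0.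
by field; rewrite h1 expf_neq0.
Qed.

Lemma polyMP (p : {poly k}) (s t : k) (B : R) : s != 0 -> abs t <= abs s ->
  (forall x, abs x = abs s -> abs p.[x] <= B) -> abs p.[t] <= B.
Proof.
move=> sn ts HB.
have B0 : 0 <= B := le_trans (abs_ge0 Habs _) (HB s erefl).
apply/ler_addgt0Pr => eps eps0.
set B' := B + eps.
have B'0 : 0 < B' by rewrite /B'; lra.
have HB' : forall x, abs x = abs s -> abs p.[x] <= B' by move=> x /HB; rewrite /B'; lra.
rewrite leNgt; apply/negP => hlt.
have [q [pq qn]] := exists_q k.
have aq : 0 < abs (q%:R : k) := abs_gt0 Habs qn.
have q0 : (0 : R) < q%:R by rewrite ltr0n prime_gt0.
set g := q%:R * (q%:R / abs (q%:R : k)).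
have g0 : 0 < g by apply: mulr_gt0 => //; apply: divr_gt0.
set lam := abs p.[t] / B'.
have lam1 : 1 < lam by rewrite /lam ltr_pdivlMr // mul1r.
have lam0 : 0 < lam by apply: lt_trans lam1.
have [m Hm] : exists m, lam^-1 ^+ m < g^-1.
  apply: geo_small; last by rewrite invr_gt0.
  by rewrite invr_ge0 (ltW lam0) /= invf_lt1.
have Hm' : g < lam ^+ m.
  rewrite exprVn in Hm.
  by rewrite -(@ltf_pV2 _ (lam ^+ m) g) ?posrE // exprn_gt0.
set n := size p.
have [e [e0' He]] := nat_exp_big (n.-1 * m) (prime_gt1 pq : (1 < q)%N).
set M := (m * e)%N.
have [w wp] := @prim_exists k q e pq qn e0'.
set N := (q ^ e)%N.
have Nn : (N%:R : k) != 0 by rewrite natrX expf_neq0.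
have PN : (size (p ^+ M) <= N)%N.
  apply: leq_trans (size_poly_exp_leq p M) _.
  by rewrite /M mulnA.
have HBM : forall x, abs x = abs s -> abs (p ^+ M).[x] <= B' ^+ M.
  move=> x /HB' hx; rewrite horner_exp absX //; apply: lerXn2r => //.
    by rewrite nnegrE abs_ge0.
  by rewrite nnegrE ltW.
have := @interp_bound N w s t (p ^+ M) (B' ^+ M) Nn wp sn PN ts HBM.
rewrite horner_exp absX //.
have -> : N%:R * (N%:R / abs (N%:R : k)) = g ^+ e.
  by rewrite /N !natrX absX // /g !exprMn exprVn.
have -> : abs p.[t] = lam * B' by rewrite /lam divfK //; apply: lt0r_neq0.
rewrite exprMn /M exprM.
have h1 : g ^+ e < (lam ^+ m) ^+ e by rewrite ltrXn2r ?(ltW g0) // -lt0n.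
have h2 : 0 < B' ^+ (m * e) by apply: exprn_gt0.
have := ltr_pM2r h2; move=> h3; rewrite -h3 in h1.
by move: h1; rewrite ltNge => /negbTE ->.
Qed.

End PolyMP.



Section Ana.
Variables (R : realType) (k : closedFieldType) (abs : k -> R).
Hypothesis Habs : is_absval abs.

Lemma abs_symm x y : abs (x - y) = abs (y - x).
Proof. by rewrite -opprB (absN Habs). Qed.

Lemma abs_tri3 x y z : abs (x - z) <= abs (x - y) + abs (y - z).
Proof. by have := absD Habs (x - y) (y - z); rewrite addrA subrK. Qed.

Lemma abs_le_add x y : abs x <= abs y + abs (x - y).
Proof. by have := absD Habs y (x - y); rewrite addrC subrK addrC. Qed.

Definition psum (c : nat -> k) (n : nat) (t : k) := \sum_(i < n) c i * t ^+ i.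

Lemma tail (f : k -> k) (c : nat -> k)
  (Hc : forall t, inD abs t -> kconverges abs (fun n => psum c n t) (f t))
  (s' : k) : inD abs s' -> s' != 0 ->
  exists K, 0 <= K /\ forall x sig, abs x <= sig -> sig < abs s' -> forall n,
    abs (f x - psum c n x) <= K * (sig / abs s') ^+ n / (1 - sig / abs s').
Proof.
move=> Ds' sn.
have [N0 HN0] := Hc s' Ds' 1 ltr01.
have as0 : 0 < abs s' := abs_gt0 Habs sn.
set K := 2 + \sum_(i < N0) abs (c i) * abs s' ^+ i.
have Sge0 : 0 <= \sum_(i < N0) abs (c i) * abs s' ^+ i.
  by apply: sumr_ge0 => i _; apply: mulr_ge0; [apply: abs_ge0|apply: exprn_ge0; apply: abs_ge0].
have K0 : 0 <= K by rewrite /K; lra.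
have Kb : forall i, abs (c i) * abs s' ^+ i <= K.
  move=> i; case: (ltnP i N0) => hi.
    rewrite /K (bigD1 (Ordinal hi)) //=.
    have : 0 <= \sum_(j < N0 | j != Ordinal hi) abs (c j) * abs s' ^+ j.
      by apply: sumr_ge0 => j _; apply: mulr_ge0; [apply: abs_ge0|apply: exprn_ge0; apply: abs_ge0].
    lra.
  have e1 := HN0 i hi.
  have e2 := HN0 i.+1 (leqW hi).
  have : abs (c i * s' ^+ i) < 2.
    have -> : c i * s' ^+ i = psum c i.+1 s' - psum c i s'.
      by rewrite /psum big_ord_recr /= addrC addrK.
    apply: le_lt_trans (abs_tri3 _ (f s') _) _.
    rewrite (abs_symm (f s')); lra.
  rewrite absM // absX //; rewrite /K; lra.
exists K; split => // x sig xs ss' n.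
have sig0 : 0 <= sig by apply: le_trans xs; apply: abs_ge0.
set rho := sig / abs s'.
have rho0 : 0 <= rho by apply: divr_ge0 => //; apply: ltW.
have rho1 : rho < 1 by rewrite /rho ltr_pdivrMr // mul1r.
have tb : forall i, abs (c i * x ^+ i) <= K * rho ^+ i.
  move=> i; rewrite absM // absX //.
  have -> : K * rho ^+ i = K * (sig / abs s') ^+ i by [].
  apply: le_trans (_ : abs (c i) * sig ^+ i <= _).
    apply: ler_wpM2l; first by apply: abs_ge0.
    by apply: lerXn2r; rewrite ?nnegrE ?abs_ge0.
  have -> : abs (c i) * sig ^+ i = (abs (c i) * abs s' ^+ i) * rho ^+ i.
    have hs : abs s' != 0 by apply: lt0r_neq0.
    rewrite /rho exprMn exprVn; field; by rewrite expf_neq0.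
  by apply: ler_wpM2r => //; apply: exprn_ge0.
have pb : forall m, abs (psum c (n + m) x - psum c n x) <= K * (rho ^+ n - rho ^+ (n + m)) / (1 - rho).
  elim => [|m IH]; first by rewrite addn0 subrr abs0 // subrr mulr0 mul0r.
  have -> : psum c (n + m.+1) x - psum c n x = (psum c (n + m) x - psum c n x) + c (n + m)%N * x ^+ (n + m).
    by rewrite /psum addnS big_ord_recr /= addrAC.
  apply: le_trans (absD Habs _ _) _.
  have hK : K * (rho ^+ n - rho ^+ (n + m.+1)) / (1 - rho) =
     K * (rho ^+ n - rho ^+ (n + m)) / (1 - rho) + K * rho ^+ (n + m).
    rewrite addnS exprS.
    have : 1 - rho != 0 by apply: lt0r_neq0; lra.
    move=> h; field; exact h.
  rewrite hK; apply: lerD => //.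
apply/ler_addgt0Pr => e e0.
have Dx : inD abs x by rewrite /inD; apply: le_lt_trans xs _; apply: lt_trans ss' _.
have [N1 HN1] := Hc x Dx e e0.
have h1 := HN1 (n + N1)%N (leq_addl _ _).
have h2 := pb N1.
apply: le_trans (abs_tri3 _ (psum c (n + N1) x) _) _.
rewrite abs_symm.
have h3 : K * (rho ^+ n - rho ^+ (n + N1)) / (1 - rho) <= K * rho ^+ n / (1 - rho).
  apply: ler_wpM2r; first by rewrite invr_ge0; lra.
  apply: ler_wpM2l => //.
  have : 0 <= rho ^+ (n + N1) by apply: exprn_ge0.
  lra.
lra.
Qed.

Lemma anaMP (f : k -> k) : analytic_on_D abs f -> nontriv abs ->
  forall s t B, inD abs s -> s != 0 -> abs t <= abs s ->
  (forall x, abs x = abs s -> abs (f x) <= B) -> abs (f t) <= B.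
Proof.
move=> [c Hc] nt s t B Ds sn ts HB.
have [s' /andP[ss' s'1]] := density Habs nt _ _ (abs_ge0 Habs s) Ds (lexx 1).
have s'n : s' != 0.
  by apply/eqP => h; move: ss'; rewrite h abs0 // ltNge abs_ge0.
have [K [K0 HK]] := @tail f c Hc s' s'1 s'n.
have as0 : 0 < abs s' := abs_gt0 Habs s'n.
set rho := abs s / abs s'.
have rho0 : 0 <= rho by apply: divr_ge0; [apply: abs_ge0|apply: ltW].
have rho1 : rho < 1 by rewrite /rho ltr_pdivrMr // mul1r.
apply/ler_addgt0Pr => e e0.
have [n Hn] : exists n, rho ^+ n < (e / 2) * (1 - rho) / (K + 1).
  apply: geo_small; first by rewrite rho0 rho1.
  apply: divr_gt0; last by lra.
  apply: mulr_gt0; lra.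
have close : forall x, abs x <= abs s -> abs (f x - (\poly_(i < n) c i).[x]) <= e / 2.
  move=> x xs; rewrite horner_poly.
  apply: le_trans (HK x (abs s) xs ss' n) _.
  rewrite -/rho.
  have h1r : 0 < 1 - rho by lra.
  rewrite ler_pdivrMr //.
  have : (K + 1) * rho ^+ n < e / 2 * (1 - rho).
    by rewrite mulrC -ltr_pdivlMr //; lra.
  have : 0 <= rho ^+ n by apply: exprn_ge0.
  nra.
have hp : abs (\poly_(i < n) c i).[t] <= B + e / 2.
  apply: (@polyMP R k abs Habs _ s t (B + e / 2) sn ts) => x xs.
  have xs' : abs x <= abs s by rewrite xs.
  have := close x xs'.
  rewrite abs_symm => h.
  apply: le_trans (abs_le_add _ (f x)) _.
  have := HB x xs; lra.
have := close t ts.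
have := abs_le_add (f t) (\poly_(i < n) c i).[t].
lra.
Qed.

Lemma cont0 (f : k -> k) : analytic_on_D abs f -> nontriv abs ->
  forall r B, 0 < r -> (forall x, 0 < abs x < r -> abs (f x) <= B) -> abs (f 0) <= B.
Proof.
move=> [c Hc] nt r B r0 HB.
have [s' /andP[ss' s'1]] := density Habs nt _ _ (lexx 0) ltr01 (lexx 1).
have s'n : s' != 0 by apply/eqP => h; move: ss'; rewrite h abs0 // ltxx.
have [K [K0 HK]] := @tail f c Hc s' s'1 s'n.
have psum1 : forall x, psum c 1 x = c 0%N by move=> x; rewrite /psum big_ord1 expr0 mulr1.
have f0 : f 0 = c 0%N.
  have h00 : abs (0 : k) <= 0 by rewrite abs0.
  have := HK 0 0 h00 ss' 1%N.
  rewrite mul0r expr1 mulr0 mul0r psum1 => h.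
  apply/eqP; rewrite -subr_eq0; apply/eqP/(abs_eq0 Habs).
  by apply/eqP; rewrite eq_le h abs_ge0.
apply/ler_addgt0Pr => e e0.
set del := Num.min (2^-1) (e / (2 * (K + 1))).
have del0 : 0 < del by rewrite lt_min; apply/andP; split; [|apply: divr_gt0]; lra.
have del1 : del <= 2^-1 by rewrite ge_min lexx.
have del2 : del <= e / (2 * (K + 1)) by rewrite ge_min lexx orbT.
set b := Num.min r (abs s' * del).
have b0 : 0 < b by rewrite lt_min r0 /=; apply: mulr_gt0.
have b1 : b <= 1.
  rewrite ge_min; apply/orP; right.
  have : abs s' * del <= abs s' * 2^-1 by apply: ler_wpM2l => //; apply: ltW.
  lra.
have [x /andP[x0 xb]] := density Habs nt _ _ (lexx 0) b0 b1.
have xr : abs x < r by move: xb; rewrite lt_min => /andP[].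
have xd : abs x < abs s' * del by move: xb; rewrite lt_min => /andP[].
have hx := HB x (introT andP (conj x0 xr)).
have xs' : abs x < abs s' by apply: lt_le_trans xd _; rewrite -{2}(mulr1 (abs s')); apply: ler_wpM2l; [apply: abs_ge0|lra].
have := HK x (abs x) (lexx _) xs' 1%N.
rewrite psum1 expr1 => h.
set rho := abs x / abs s' in h.
have rd : rho < del by rewrite /rho ltr_pdivrMr // mulrC.
have rho0 : 0 <= rho by apply: divr_ge0; apply: ltW.
have h2 : K * rho / (1 - rho) <= 2 * K * rho.
  rewrite ler_pdivrMr; last by lra.
  have : 0 <= K * rho by apply: mulr_ge0.
  nra.
have h3 : 2 * K * rho <= e.
  have : 2 * (K + 1) * del <= e by rewrite mulrC -ler_pdivlMr //; lra.
  nra.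
rewrite f0.
have := abs_le_add (c 0%N) (f x); rewrite abs_symm; lra.
Qed.

End Ana.



Section RealAux.
Variable R : realType.

Lemma max1_pos (x : R) : 0 < Num.max 1 x.
Proof. by apply: lt_le_trans ltr01 _; rewrite le_max lexx. Qed.

Lemma ln_max_le (x M : R) : 1 <= M -> x <= M -> ln (Num.max 1 x) <= ln M.
Proof.
move=> M1 xM; rewrite ler_ln ?posrE ?max1_pos //; last by lra.
by rewrite ge_max M1 xM.
Qed.

Lemma le_expR_of_ln (x B : R) : ln (Num.max 1 x) <= B -> x <= sequences.expR B.
Proof.
move=> h; apply: le_trans (_ : Num.max 1 x <= _); first by rewrite le_max lexx orbT.
by rewrite -[X in X <= _](lnK (max1_pos x)) ler_expR.
Qed.

Lemma ln_max0 (x : R) : 0 <= ln (Num.max 1 x).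
Proof. by apply: ln_ge0; rewrite le_max lexx. Qed.

End RealAux.



Theorem lemma4p1 (R : realType) (k : closedFieldType) (abs : k -> R)
  (Habs : is_absval abs) (Hcompl : kcomplete abs)
  (d : nat) (hd : (2 <= d)%N)
  (alpha : 'I_d.+1 -> k -> k)
  (Halpha : forall i, merom_at0_on_D abs (alpha i))
  (Halpha0 : forall t, inD abs t -> t != 0 -> alpha ord0 t != 0)
  (C : R) (hC : 0 < C)
  (HC : forall t z : k, 0 < abs t -> abs t <= 2^-1 ->
     `| d%:R^-1 * ln (Num.max 1 (abs (\sum_(i < d.+1) alpha i t * z ^+ (d - i))))
        - ln (Num.max 1 (abs z)) | <= C * ln (abs t)^-1)
  (a : k -> k) (Ha : merom_at0_on_D abs a)
  (u : nat -> k -> k)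
  (Hu_an : forall m, analytic_on_D abs (u m))
  (Hu : forall m t, inD abs t -> t != 0 ->
     u m t = iter m (fun z => \sum_(i < d.+1) alpha i t * z ^+ (d - i)) (a t))
  (l : nat) (hl : C * d%:R <= l%:R)
  (N : nat) (Q : 'I_N -> {poly k})
  (HQ : forall n : nat, exists i : 'I_N, exists h : k -> k, analytic_on_D abs h /\
     forall t, inD abs t -> t != 0 -> (u n t - (Q i).[t]) / t ^+ l = h t)
  (n0 : nat) (hn0 : (1 <= n0)%N) (r0 : R) (hr0 : 0 < r0) (hr0' : r0 <= 2^-1) :
  let A := \big[Num.max/0]_(j < N) (sup [set abs (Q j).[t] | t in inD abs] + 2) in
  (forall t, abs t < r0 -> abs (u n0 t) <= ln A) ->
  let g := fun (m : nat) (t : k) => (d%:R ^+ m)^-1 * ln (Num.max 1 (abs (u m t))) in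
  let C1 := d%:R / (d%:R - 1) * ln (3 * A) in
  forall j : nat, forall t, abs t < r0 ^+ (2 ^ j) ->
    g (n0 + j)%N t <= C1 / d%:R ^+ n0.
Proof.
move=> A HA g C1 j t Ht.
have [i0 _] := HQ 0%N.
set dR : R := d%:R.
have d2 : (2 : R) <= dR by rewrite /dR ler_nat.
have D0 : inD abs (0 : k) by rewrite /inD abs0.
have Qb0 : forall i x, inD abs x -> abs (Q i).[x] <= A - 2.
  move=> i x Dx.
  set S := [set abs (Q i).[y] | y in inD abs]%classic.
  have hS : has_sup S.
    split; first by exists (abs (Q i).[x]), x.
    exists (\sum_(m < size (Q i)) abs (Q i)`_m) => _ [y Dy <-].
    rewrite horner_coef; apply: le_trans (abs_sum Habs _ _ _ _) _.
    apply: ler_sum => m _; rewrite absM // absX //.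
    rewrite -[X in _ <= X]mulr1; apply: ler_wpM2l; first exact: abs_ge0 Habs _.
    apply: exprn_ile1; [exact: abs_ge0 Habs _ | exact: ltW].
  have h1 : abs (Q i).[x] <= sup S by apply: sup_upper_bound => //; exists x.
  have h2 : sup S + 2 <= A.
    rewrite /A. exact: (le_bigmax 0 (fun j0 : 'I_N => sup [set abs (Q j0).[t0] | t0 in inD abs]%classic + 2) i).
  lra.
have A2 : 2 <= A by have := Qb0 i0 0 D0; have := abs_ge0 Habs (Q i0).[0]; lra.
have Qb : forall i x, inD abs x -> abs (Q i).[x] <= A by move=> i x /(Qb0 i); lra.
set l3 := ln (3 * A).
have l3p : 0 < l3 by rewrite /l3 ln_gt0 //; lra.
have C10 : 0 <= C1 / dR ^+ n0.
  apply: divr_ge0; last by apply: exprn_ge0; lra.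
  apply: mulr_ge0; last exact: ltW.
  apply: divr_ge0; lra.
have [nt|nnt] := pselect (nontriv abs); last first.
  have all1 : forall y : k, abs y <= 1.
    move=> y; rewrite leNgt; apply/negP => hy.
    apply: nnt; exists y^-1; rewrite absV // invr_gt0 invf_lt1; last by lra.
    by rewrite hy andbT; lra.
  rewrite /g; have -> : Num.max 1 (abs (u (n0 + j)%N t)) = 1 by apply/max_idPl.
  by rewrite ln1 mulr0.
have dR1 : 0 < dR - 1 by lra.
have dR0 : 0 < dR by lra.
have claim : forall j t, abs t < r0 ^+ (2 ^ j) ->
   ln (Num.max 1 (abs (u (n0 + j)%N t))) <= l3 * (dR ^+ j.+1 - 1) / (dR - 1).
  elim => [|j' IH] t0 Ht0.
    rewrite expn0 expr1 in Ht0; rewrite addn0 expr1 mulfK; last by apply: lt0r_neq0.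
    apply: ln_max_le; first by lra.
    apply: le_trans (HA t0 Ht0) _.
    have := @le_ln1Dx R (A - 1) ltac:(lra).
    rewrite addrC subrK; lra.
  set n := (n0 + j')%N.
  rewrite addnS.
  set rj := r0 ^+ (2 ^ j').
  have rj0 : 0 < rj by apply: exprn_gt0.
  have rjr0 : rj <= r0.
    rewrite /rj -{2}(expr1 r0); apply: ler_wiXn2l; [exact: ltW | lra | by rewrite expn_gt0].
  have rj2 : r0 ^+ (2 ^ j'.+1) = rj ^+ 2 by rewrite /rj expnSr exprM.
  rewrite rj2 in Ht0.
  set Bj := l3 * (dR ^+ j'.+1 - 1) / (dR - 1).
  have Bj0 : 0 <= Bj.
    apply: divr_ge0; last exact: ltW.
    apply: mulr_ge0; first exact: ltW.
    rewrite subr_ge0; apply: exprn_ege1; lra.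
  set E := sequences.expR (dR * Bj).
  have E1 : 1 <= E.
    have := expR_ge1Dx (dR * Bj); have : 0 <= dR * Bj by apply: mulr_ge0 => //; lra.
    rewrite /E; lra.
  have target : l3 * (dR ^+ j'.+2 - 1) / (dR - 1) = ln (3 * A * E).
    rewrite lnM ?posrE; [|lra|rewrite /E expR_gt0 //].
    rewrite /E expRK -/l3 /Bj exprS.
    have dn : dR - 1 != 0 by apply: lt0r_neq0.
    by field.
  rewrite target.
  suff hu : abs (u n.+1 t0) <= 3 * A * E.
    by apply: ln_max_le => //; nra.
  have key : forall x, 0 < abs x < rj ^+ 2 -> abs (u n.+1 x) <= 3 * A * E.
    move=> x /andP[x0 xr].
    have xn : x != 0 by apply/eqP => h; move: x0; rewrite h abs0 // ltxx.
    have Dx : inD abs x by rewrite /inD; apply: lt_le_trans xr _; rewrite expr2; nra.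
    have sq : Num.sqrt (abs x) < rj.
      rewrite -[X in _ < X](ger0_norm (ltW rj0)) -sqrtr_sqr ltr_sqrt //.
      by apply: exprn_gt0.
    have [s /andP[ss sr]] := density Habs nt _ _ (sqrtr_ge0 (abs x)) sq ltac:(lra).
    have sx2 : abs x < abs s ^+ 2.
      rewrite -(sqr_sqrtr (abs_ge0 Habs x)) ltrXn2r //; exact: sqrtr_ge0.
    have as0 : 0 < abs s by apply: le_lt_trans ss; exact: sqrtr_ge0.
    have sn : s != 0 by apply/eqP => h; move: as0; rewrite h abs0 // ltxx.
    have as1 : abs s <= 2^-1 by lra.
    have xs : abs x <= abs s by apply: ltW; apply: lt_le_trans sx2 _; rewrite expr2; nra.
    have Ds : inD abs s by rewrite /inD; lra.
    have [i [h [Hh Heq]]] := HQ n.+1.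
    set F := (sequences.expR (dR * Bj + dR * (C * ln (abs s)^-1)) + A) / abs s ^+ l.
    have hb : forall y, abs y = abs s -> abs (h y) <= F.
      move=> y ys.
      have yn : y != 0 by apply/eqP => h0; move: as0; rewrite -ys h0 abs0 // ltxx.
      have Dy : inD abs y by rewrite /inD ys.
      have uy : u n.+1 y = \sum_(i < d.+1) alpha i y * (u n y) ^+ (d - i).
        by rewrite (Hu n.+1 y Dy yn) iterS -(Hu n y Dy yn).
      have hc := HC y (u n y) (ltac:(by rewrite ys)) (ltac:(by rewrite ys)).
      rewrite -uy ys in hc.
      have IHy := IH y (ltac:(by rewrite ys)).
      have lu : ln (Num.max 1 (abs (u n.+1 y))) <= dR * Bj + dR * (C * ln (abs s)^-1).
        have h1 := le_trans (ler_norm _) hc.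
        set L1 := ln (Num.max 1 (abs (u n.+1 y))) in h1 *.
        set L0 := ln (Num.max 1 (abs (u n y))) in h1 IHy.
        have -> : L1 = dR * (dR^-1 * L1) by rewrite mulrA mulfV ?mul1r //; apply: lt0r_neq0.
        rewrite -mulrDr; apply: ler_wpM2l; first exact: ltW.
        rewrite -/dR in h1; rewrite /Bj; lra.
      have hu := @le_expR_of_ln R _ _ lu.
      rewrite -(Heq y Dy yn) (absM Habs) (absV Habs) (absX Habs) ys.
      apply: ler_wpM2r; first by rewrite invr_ge0 exprn_ge0 // ltW.
      apply: le_trans (absB Habs _ _) _.
      have := Qb i y Dy; lra.
    have ht := @anaMP R k abs Habs h Hh nt s x F Ds sn xs hb.
    have ueq : u n.+1 x = (Q i).[x] + x ^+ l * h x.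
      by rewrite -(Heq x Dx xn) mulrC divfK ?expf_neq0 // addrC subrK.
    have hQ := Qb0 i x Dx.
    set G := sequences.expR (dR * (C * ln (abs s)^-1)).
    have G0 : 0 < G by apply: expR_gt0.
    have sl0 : 0 < abs s ^+ l by apply: exprn_gt0.
    have sl1 : abs s ^+ l <= 1 by apply: exprn_ile1; lra.
    have hF : F = (E * G + A) / abs s ^+ l by rewrite /F /E /G expRD.
    have sG : abs s ^+ l * G <= 1.
      have lns : ln (abs s) <= 0 by apply: ln_le0; lra.
      rewrite /G -[abs s ^+ l](lnK (_ : abs s ^+ l \is Num.pos)) ?posrE // -expRD -expR0 ler_expR.
      rewrite lnXn // lnV ?posrE // -mulr_natl.
      move: hl; rewrite -/dR => hl'; nra.
    have hxl : abs x ^+ l <= abs s ^+ l * abs s ^+ l.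
      rewrite -exprD addnn -mul2n exprM.
      apply: lerXn2r; [rewrite nnegrE; exact: abs_ge0 Habs _ | rewrite nnegrE exprn_ge0 //; exact: abs_ge0 Habs _ | exact: ltW].
    have k2 : abs x ^+ l * F <= E + A.
      rewrite hF.
      have hpos : 0 <= (E * G + A) / abs s ^+ l.
        apply: divr_ge0; last exact: ltW.
        have : 0 <= E * G by apply: mulr_ge0; lra.
        lra.
      apply: le_trans (ler_wpM2r hpos hxl) _.
      have -> : abs s ^+ l * abs s ^+ l * ((E * G + A) / abs s ^+ l) = E * (abs s ^+ l * G) + A * abs s ^+ l.
        have sln : abs s ^+ l != 0 by apply: lt0r_neq0.
        by field.
      have : E * (abs s ^+ l * G) <= E by rewrite -{2}(mulr1 E); apply: ler_wpM2l; lra.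
      have : A * abs s ^+ l <= A by rewrite -{2}(mulr1 A); apply: ler_wpM2l; lra.
      lra.
    rewrite ueq; apply: le_trans (absD Habs _ _) _.
    rewrite (absM Habs) (absX Habs).
    have : abs x ^+ l * abs (h x) <= abs x ^+ l * F.
      by apply: ler_wpM2l => //; apply: exprn_ge0; exact: abs_ge0 Habs _.
    nra.
  have [->|t0n] := eqVneq t0 0.
    apply: (@cont0 R k abs Habs _ (Hu_an n.+1) nt (rj ^+ 2)); first by apply: exprn_gt0.
    exact: key.
  apply: key; rewrite Ht0 andbT; by apply: (abs_gt0 Habs).
have := claim j t Ht.
rewrite /g /C1 -/dR -/l3 => hc.
have X0 : 0 < dR ^+ j by apply: exprn_gt0.
have Y0 : 0 < dR ^+ n0 by apply: exprn_gt0.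
have hinv : 0 <= (dR ^+ (n0 + j))^-1 by rewrite invr_ge0 exprn_ge0 // ltW.
apply: le_trans (ler_wpM2l hinv hc) _.
rewrite exprD exprS.
set X := dR ^+ j; set Y := dR ^+ n0.
have Xn : X != 0 by apply: lt0r_neq0.
have Yn : Y != 0 by apply: lt0r_neq0.
have dn : dR - 1 != 0 by apply: lt0r_neq0.
have -> : (Y * X)^-1 * (l3 * (dR * X - 1) / (dR - 1)) =
   dR / (dR - 1) * l3 / Y - l3 / ((dR - 1) * Y * X).
  by field; rewrite Xn Yn.
have : 0 <= l3 / ((dR - 1) * Y * X).
  by apply: divr_ge0; [apply: ltW | apply: mulr_ge0; [apply: mulr_ge0|]; apply: ltW].
lra.
Qed.
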